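(* Let $m\ge3$. The Terwilliger algebra $T=T(x_0)$ of the doubled Odd graph $2.O_{m+1}$ coincides with the centralizer algebra $\mathcal{A}$ of the stabilizer of $x_0$ in $\mathrm{Aut}(2.O_{m+1})$.
   Context: $S=\{1,\dots,2m+1\}$, $X=\binom{S}{m}\cup\binom{S}{m+1}$; the doubled Odd graph $2.O_{m+1}$ has vertex set $X$, two vertices adjacent iff one is a proper subset of the other, with distance $\partial$. $x_0=\{1,\dots,m\}$. $T$ is the subalgebra of complex $X\times X$ matrices generated by the adjacency matrix $A_1$ and the diagonal matrices $E^*_i$ ($0\le i\le 2m+1$) with $(y,y)$-entry $1$ iff $\partial(x_0,y)=i$. The stabilizer of $x_0$ in $\mathrm{Aut}(2.O_{m+1})$ is $G=\mathrm{Sym}(x_0)\times\mathrm{Sym}(S\setminus x_0)$ acting naturally on $X$; $\mathcal{A}$ is the set of complex $X\times X$ matrices $B$ with $B_{\sigma(y),\sigma(z)}=B_{y,z}$ for all $\sigma\in G$, $y,z\in X$. *)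

(* Defs.v *)
From mathcomp Require Import all_boot all_order all_algebra all_fingroup.
Unset Printing Implicit Defensive.
Import GRing.Theory Num.Theory.
Local Open Scope ring_scope.

(* The ground set S = {1,...,2m+1} is modelled by 'I_(2m+1) = {0,...,2m}. *)
Definition S (m : nat) := 'I_(m.*2.+1).

Definition Xpred (m : nat) (A : {set S m}) : bool :=
  (#|A| == m) || (#|A| == m.+1).

Definition X (m : nat) : finType := {A : {set S m} | Xpred m A}.

Definition adj (m : nat) (A B : {set S m}) : bool :=
  (A \proper B) || (B \proper A).

(* x0 = {1,...,m}, i.e. {0,...,m-1} in our labelling *)
Definition x0 (m : nat) : {set S m} := [set i : S m | (i < m)%N].

Fixpoint ball (m : nat) (k : nat) : {set {set S m}} :=
  match k with
  | 0 => [set x0 m]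
  | k'.+1 => ball m k' :|:
      [set B : {set S m} | Xpred m B && [exists A in ball m k', adj m A B]]
  end.

Definition dist (m : nat) (y : X m) (i : nat) : bool :=
  (val y \in ball m i) && ((i == 0)%N || (val y \notin ball m i.-1)).

Notation Mx C m := 'M[C]_(#|X m|).

Definition entry (C : nzRingType) (m : nat) (B : Mx C m) (y z : X m) : C :=
  B (enum_rank y) (enum_rank z).

Definition A1 (C : nzRingType) (m : nat) : Mx C m :=
  \matrix_(i, j) (adj m (val (enum_val i)) (val (enum_val j)))%:R.

Definition Estar (C : nzRingType) (m : nat) (k : nat) : Mx C m :=
  \matrix_(i, j) ((i == j) && dist m (enum_val i) k)%:R.

Inductive inT (C : nzRingType) (m : nat) : Mx C m -> Prop :=
  | inT_A1 : inT C m (A1 C m)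
  | inT_E (k : nat) : (k <= m.*2.+1)%N -> inT C m (Estar C m k)
  | inT_1 : inT C m 1%:M
  | inT_add B D : inT C m B -> inT C m D -> inT C m (B + D)
  | inT_scale (c : C) B : inT C m B -> inT C m (c *: B)
  | inT_mul B D : inT C m B -> inT C m D -> inT C m (B *m D).

Lemma act_Xpred (m : nat) (s : {perm S m}) (y : X m) : Xpred m (s @: val y).
Proof. rewrite /Xpred card_imset; [exact: (valP y) | exact: perm_inj]. Qed.

Definition actX (m : nat) (s : {perm S m}) (y : X m) : X m :=
  exist _ (s @: val y) (act_Xpred m s y).

(* G = Sym(x0) x Sym(S \ x0): permutations of S fixing x0 setwise *)
Definition inG (m : nat) (s : {perm S m}) : bool := s @: x0 m == x0 m.

Definition inCent (C : nzRingType) (m : nat) (B : Mx C m) : Prop :=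
  forall s : {perm S m}, inG m s ->
    forall y z : X m, entry C m B (actX m s y) (actX m s z) = entry C m B y z.

(* Main.v *)
Require Import Defs.
From mathcomp Require Import all_boot all_order all_algebra all_fingroup zify.
Set Implicit Arguments.
Unset Strict Implicit.

Section Gen.
Variable T : finType.
Variable x0 : {set T}.
Variable m : nat.
Hypothesis hx0 : #|x0| = m.

Definition XP (Y : {set T}) := (#|Y| == m) || (#|Y| == m.+1).
Definition adjG (Y Z : {set T}) := (Y \proper Z) || (Z \proper Y).
Definition alS (Y : {set T}) := x0 :\: Y.
Definition beS (Y : {set T}) := Y :\: x0.
Definition lvS (Y : {set T}) := (#|alS Y| + #|beS Y|)%N.

Lemma card_Y (Y : {set T}) : (#|Y| + #|alS Y| = m + #|beS Y|)%N.
Proof.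
rewrite /alS /beS -hx0.
move: (cardsID x0 Y) (cardsID Y x0); rewrite setIC; lia.
Qed.

Lemma balX (Y : {set T}) : XP Y ->
  (#|beS Y| = #|alS Y| /\ #|Y| = m) \/ (#|beS Y| = #|alS Y|.+1 /\ #|Y| = m.+1).
Proof. move: (card_Y Y); rewrite /XP => H /orP[] /eqP; lia. Qed.

Lemma balR (Y : {set T}) : XP Y ->
  #|beS Y| = #|alS Y| \/ #|beS Y| = #|alS Y|.+1.
Proof. by move/balX; lia. Qed.

Lemma XP_card (Y : {set T}) : #|beS Y| = #|alS Y| \/ #|beS Y| = #|alS Y|.+1 -> XP Y.
Proof. move: (card_Y Y); rewrite /XP=> H1 H2; apply/orP; case: H2 => H2; [left|right]; apply/eqP; lia. Qed.

Ltac flipt k Y := let h := fresh "h" in let u := fresh "u" in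
  move=> h; apply/setP=> u; rewrite !inE; case: (eqVneq u k) => [->|] //=;
  rewrite ?h ?(negbTE h) /=; case: (u \in x0); case: (k \in Y); case: (u \in Y).

Lemma alS_add (Y : {set T}) k : k \in x0 -> alS (k |: Y) = alS Y :\ k.
Proof. by flipt k Y. Qed.
Lemma beS_add (Y : {set T}) k : k \in x0 -> beS (k |: Y) = beS Y.
Proof. by flipt k Y. Qed.
Lemma alS_del (Y : {set T}) k : k \in x0 -> alS (Y :\ k) = k |: alS Y.
Proof. by flipt k Y. Qed.
Lemma beS_del (Y : {set T}) k : k \in x0 -> beS (Y :\ k) = beS Y.
Proof. by flipt k Y. Qed.
Lemma alS_addC (Y : {set T}) k : k \notin x0 -> alS (k |: Y) = alS Y.
Proof. by flipt k Y. Qed.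
Lemma beS_addC (Y : {set T}) k : k \notin x0 -> beS (k |: Y) = k |: beS Y.
Proof. by flipt k Y. Qed.
Lemma alS_delC (Y : {set T}) k : k \notin x0 -> alS (Y :\ k) = alS Y.
Proof. by flipt k Y. Qed.
Lemma beS_delC (Y : {set T}) k : k \notin x0 -> beS (Y :\ k) = beS Y :\ k.
Proof. by flipt k Y. Qed.

Lemma setY_eq (Y Z : {set T}) : alS Y = alS Z -> beS Y = beS Z -> Y = Z.
Proof.
move=> /setP ha /setP hb; apply/setP=> u; move: (ha u) (hb u); rewrite !inE.
by case: (u \in x0); case: (u \in Y); case: (u \in Z).
Qed.

Lemma in_alS u Y : (u \in alS Y) = (u \in x0) && (u \notin Y).
Proof. by rewrite !inE andbC. Qed.
Lemma in_beS u Y : (u \in beS Y) = (u \notin x0) && (u \in Y).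
Proof. by rewrite !inE. Qed.

Lemma lv_addA (Y : {set T}) k : k \in x0 -> k \notin Y -> (lvS (k |: Y)).+1 = lvS Y.
Proof.
move=> h1 h2; rewrite /lvS alS_add // beS_add //.
move: (cardsD1 k (alS Y)); rewrite in_alS h1 h2 /=; lia.
Qed.
Lemma lv_addB (Y : {set T}) k : k \notin x0 -> k \notin Y -> lvS (k |: Y) = (lvS Y).+1.
Proof.
move=> h1 h2; rewrite /lvS alS_addC // beS_addC // cardsU1 in_beS (negbTE h2) andbF /=; lia.
Qed.
Lemma lv_delA (Y : {set T}) k : k \in x0 -> k \in Y -> lvS (Y :\ k) = (lvS Y).+1.
Proof.
move=> h1 h2; rewrite /lvS alS_del // beS_del // cardsU1 in_alS h2 andbF /=; lia.
Qed.
Lemma lv_delB (Y : {set T}) k : k \notin x0 -> k \in Y -> (lvS (Y :\ k)).+1 = lvS Y.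
Proof.
move=> h1 h2; rewrite /lvS alS_delC // beS_delC //.
move: (cardsD1 k (beS Y)); rewrite in_beS h1 h2 /=; lia.
Qed.

Lemma adj_add (Y : {set T}) k : k \notin Y -> adjG Y (k |: Y).
Proof. by move=> h; rewrite /adjG; apply/orP; left; rewrite -{1}(setU1K h) properD1 // setU11. Qed.

Lemma adj_del (Y : {set T}) k : k \in Y -> adjG Y (Y :\ k).
Proof. by move=> h; rewrite /adjG; apply/orP; right; rewrite properD1. Qed.

Lemma adj_flip (Y Z : {set T}) : XP Y -> XP Z -> adjG Y Z ->
  exists k, (k \notin Y /\ Z = k |: Y) \/ (k \in Y /\ Z = Y :\ k).
Proof.
rewrite /XP => hY hZ.
have hY' : #|Y| = m \/ #|Y| = m.+1 by case/orP: hY => /eqP; [left|right].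
have hZ' : #|Z| = m \/ #|Z| = m.+1 by case/orP: hZ => /eqP; [left|right].
case/orP => hp; have hc := proper_card hp;
  case/properP: hp => hs [k hk1 hk2]; exists k.
- left; split => //; apply/esym/eqP; rewrite eqEcard subUset sub1set hk1 hs /=.
  rewrite cardsU1 hk2 /=; lia.
- right; split => //; apply/eqP; rewrite eqEcard subsetD1 hs hk2 /=.
  move: (cardsD1 k Y); rewrite hk1 /=; lia.
Qed.

Lemma adj_lv (Y Z : {set T}) : XP Y -> XP Z -> adjG Y Z ->
  lvS Z = (lvS Y).+1 \/ lvS Y = (lvS Z).+1.
Proof.
move=> hY hZ ha; case: (adj_flip hY hZ ha) => k [[h1 ->]|[h1 ->]];
  case h: (k \in x0).
- by right; rewrite lv_addA ?h.
- by left; rewrite lv_addB ?h.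
- by left; rewrite lv_delA ?h.
- by right; rewrite lv_delB ?h.
Qed.

Lemma lv0 (Y : {set T}) : lvS Y = 0%N -> Y = x0.
Proof.
rewrite /lvS /alS /beS => h; apply: setY_eq; rewrite /alS /beS setDv.
  by apply/eqP; rewrite -cards_eq0; apply/eqP; lia.
by apply/eqP; rewrite -cards_eq0; apply/eqP; lia.
Qed.

Lemma lvx0 : lvS x0 = 0%N.
Proof. by rewrite /lvS /alS /beS setDv cards0. Qed.

Lemma lv_down (Y : {set T}) : XP Y -> (0 < lvS Y)%N ->
  exists Z, [/\ XP Z, adjG Y Z & (lvS Z).+1 = lvS Y].
Proof.
move=> hY hl; case: (balX hY) => [[hb hc]|[hb hc]].
- have : (0 < #|alS Y|)%N by rewrite /lvS in hl; lia.
  case/card_gt0P => k; rewrite in_alS => /andP[h1 h2].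
  exists (k |: Y); split; [|exact: adj_add|exact: lv_addA].
  by rewrite /XP cardsU1 h2 hc /= eqxx orbT.
- have : (0 < #|beS Y|)%N by lia.
  case/card_gt0P => k; rewrite in_beS => /andP[h1 h2].
  exists (Y :\ k); split; [|exact: adj_del|exact: lv_delB].
  by rewrite /XP; move: (cardsD1 k Y); rewrite h2 hc /= => e; apply/orP; left; apply/eqP; lia.
Qed.

End Gen.

Section Spec.
Variable m : nat.

Lemma card_x0 : #|x0 m| = m.
Proof.
have H : (m <= m.*2.+1)%N by lia.
have -> : x0 m = [set widen_ord H i | i : 'I_m].
  apply/setP => i; rewrite !inE; apply/idP/imsetP.
    by move=> lt; exists (Ordinal lt) => //; apply: val_inj.
  by case=> j _ ->; rewrite /= ltn_ord.
by rewrite card_imset ?card_ord // => a b /(congr1 val) /= ?; apply: val_inj.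
Qed.

Lemma card_S : #|S m| = m.*2.+1.
Proof. exact: card_ord. Qed.

Lemma ball_char k : ball m k = [set Y | Xpred m Y && (lvS (x0 m) Y <= k)%N].
Proof.
elim: k => [|k IH] /=.
  apply/setP => Y; rewrite !inE; apply/eqP/andP.
    move=> ->; split; first by rewrite /Xpred card_x0 eqxx.
    by rewrite lvx0.
  case=> _; rewrite leqn0 => /eqP h. exact: lv0 h.
rewrite IH; apply/setP => Y; rewrite !inE; apply/idP/idP.
  case/orP => [/andP[-> h] | /andP[hY /existsP[A /andP[]]]]; first by lia.
  rewrite inE => /andP[hA lA] hadj; rewrite hY /=.
  by case: (adj_lv card_x0 hA hY hadj); lia.
case/andP => hY hl; case: (leqP (lvS (x0 m) Y) k) => hk; first by apply/orP; left; apply/andP.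
case: (lv_down card_x0 hY (leq_ltn_trans (leq0n _) hk)) => Z [hZ ha hl2].
apply/orP; right; apply/andP; split => //; apply/existsP; exists Z; apply/andP; split.
  by rewrite inE; apply/andP; split; [exact: hZ | lia].
by rewrite /adj orbC.
Qed.

Lemma dist_char (y : X m) i : dist m y i = (lvS (x0 m) (val y) == i).
Proof.
rewrite /dist !ball_char !inE (valP y) /=.
case: i => [|i] /=; first by rewrite andbT leqn0.
rewrite -ltnNge; apply/andP/eqP; lia.
Qed.

End Spec.

Section GenPerm.
Variable T : finType.

Lemma imsetK_perm (s : {perm T}) (Y : {set T}) : (s^-1)%g @: (s @: Y) = Y.
Proof.
apply/setP => u; rewrite -{1}[u](permK s) mem_imset //; last exact: perm_inj.
by rewrite mem_imset //; exact: perm_inj.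
Qed.

Lemma mem_imset_perm (s : {perm T}) (Y : {set T}) u : (s u \in s @: Y) = (u \in Y).
Proof. by rewrite mem_imset //; exact: perm_inj. Qed.

Lemma in_imset_perm (s : {perm T}) (Y : {set T}) u : (u \in s @: Y) = ((s^-1)%g u \in Y).
Proof. by rewrite -{1}[u](permKV s) mem_imset_perm. Qed.

Lemma proper_imset (s : {perm T}) (Y Z : {set T}) : (s @: Y \proper s @: Z) = (Y \proper Z).
Proof.
apply/idP/idP => h; last by apply: imset_proper => // a b _ _; exact: perm_inj.
rewrite -(imsetK_perm s Y) -(imsetK_perm s Z); apply: imset_proper => // a b _ _; exact: perm_inj.
Qed.

Lemma adjG_imset (s : {perm T}) (Y Z : {set T}) : adjG (s @: Y) (s @: Z) = adjG Y Z.
Proof. by rewrite /adjG !proper_imset. Qed.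

Lemma card_imset_perm (s : {perm T}) (Y : {set T}) : #|s @: Y| = #|Y|.
Proof. by rewrite card_imset //; exact: perm_inj. Qed.

Variable x0 : {set T}.

Lemma alS_imset (s : {perm T}) (Y : {set T}) : s @: x0 = x0 -> alS x0 (s @: Y) = s @: alS x0 Y.
Proof.
move=> hs; apply/setP => u; rewrite in_imset_perm !inE -{1}hs in_imset_perm.
by rewrite in_imset_perm.
Qed.

Lemma beS_imset (s : {perm T}) (Y : {set T}) : s @: x0 = x0 -> beS x0 (s @: Y) = s @: beS x0 Y.
Proof.
move=> hs; apply/setP => u; rewrite in_imset_perm !inE -{1}hs in_imset_perm.
by rewrite in_imset_perm.
Qed.

Lemma lv_imset (s : {perm T}) (Y : {set T}) : s @: x0 = x0 -> lvS x0 (s @: Y) = lvS x0 Y.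
Proof. by move=> hs; rewrite /lvS alS_imset // beS_imset // !card_imset_perm. Qed.

End GenPerm.

Lemma color_perm (T : finType) (K : eqType) (t t' : T -> K) :
  (forall c, #|[set k | t k == c]| = #|[set k | t' k == c]|) ->
  exists s : {perm T}, forall k, t' (s k) = t k.
Proof.
move: {2}#|[set k | t k != t' k]| (leqnn #|[set k | t k != t' k]|) => n.
elim: n t' => [|n IH] t' hn hc.
  move: hn; rewrite leqn0 cards_eq0 => /eqP h0.
  exists 1%g => k; rewrite perm1; apply/eqP; rewrite eq_sym; apply: contraT => hk.
  have : k \in [set k | t k != t' k] by rewrite inE.
  by rewrite h0 inE.
case: (boolP [exists k, t k != t' k]) => [/existsP [i hi]|hno]; last first.
  exists 1%g => k; rewrite perm1; apply/eqP; rewrite eq_sym.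
  by move: hno; rewrite negb_exists => /forallP /(_ k); rewrite negbK.
set c := t i.
have [j hj1 hj2] : exists2 j, t' j == c & t j != c.
  apply/exists_inP; apply: contraT; rewrite negb_exists_in => /forall_inP hall.
  have hsub : [set k | t' k == c] \proper [set k | t k == c].
    apply/properP; split.
      by apply/subsetP => k; rewrite !inE => hk; move: (hall k hk); rewrite negbK.
    by exists i; rewrite !inE ?eqxx // eq_sym.
  by move: (proper_card hsub); rewrite hc ltnn.
pose t2 := fun k => t' (tperm i j k).
have hc2 : forall d, #|[set k | t k == d]| = #|[set k | t2 k == d]|.
  move=> d; rewrite hc.
  have -> : [set k | t2 k == d] = tperm i j @^-1: [set k | t' k == d].
    by apply/setP => k; rewrite !inE.
  by rewrite card_preimset //; exact: perm_inj.
have hsub : [set k | t k != t2 k] \proper [set k | t k != t' k].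
  apply/properP; split; last by exists i; rewrite !inE // /t2 tpermL (eqP hj1) eqxx.
  apply/subsetP => k; rewrite !inE /t2.
  case: (tpermP i j k) => [->|->|_ _] //.
  by move=> _; rewrite (eqP hj1).
have := proper_card hsub => hlt.
case: (IH t2 _ hc2) => [|s hs]; first by lia.
by exists (s * tperm i j)%g => k; rewrite permM -hs.
Qed.

Section Cells.
Variable T : finType.

Definition cell (U P Q : {set T}) b1 b2 :=
  #|[set k in U | (k \in P == b1) && (k \in Q == b2)]|.

Lemma cell_rel (U P Q : {set T}) :
  [/\ cell U P Q true true = #|U :&: P :&: Q|,
      (cell U P Q true true + cell U P Q true false = #|U :&: P|)%N,
      (cell U P Q true true + cell U P Q false true = #|U :&: Q|)%N &
      (cell U P Q true true + cell U P Q true false + cell U P Q false true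
        + cell U P Q false false = #|U|)%N].
Proof.
have e1 : [set k in U | (k \in P == true) && (k \in Q == true)] = U :&: P :&: Q.
  by apply/setP => k; rewrite !inE; case: (k \in U); case: (k \in P); case: (k \in Q).
have e2 : [set k in U | (k \in P == true) && (k \in Q == false)] = (U :&: P) :\: Q.
  by apply/setP => k; rewrite !inE; case: (k \in U); case: (k \in P); case: (k \in Q).
have e3 : [set k in U | (k \in P == false) && (k \in Q == true)] = (U :&: Q) :\: P.
  by apply/setP => k; rewrite !inE; case: (k \in U); case: (k \in P); case: (k \in Q).
have e4 : [set k in U | (k \in P == false) && (k \in Q == false)] = (U :\: P) :\: Q.
  by apply/setP => k; rewrite !inE; case: (k \in U); case: (k \in P); case: (k \in Q).
have e5 : U :&: Q :&: P = U :&: P :&: Q by rewrite -!setIA (setIC Q).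
rewrite /cell e1 e2 e3 e4; split => //.
- by rewrite cardsID.
- by rewrite -e5 cardsID.
- move: (cardsID Q (U :&: P)) (cardsID P (U :&: Q)) (cardsID Q (U :\: P)) (cardsID P U).
  have -> : (U :\: P) :&: Q = (U :&: Q) :\: P.
    by apply/setP => k; rewrite !inE; case: (k \in U); case: (k \in P); case: (k \in Q).
  rewrite e5; lia.
Qed.

Lemma cell_eq (U P Q U' P' Q' : {set T}) :
  #|U| = #|U'| -> #|U :&: P| = #|U' :&: P'| -> #|U :&: Q| = #|U' :&: Q'| ->
  #|U :&: P :&: Q| = #|U' :&: P' :&: Q'| ->
  forall b1 b2, cell U P Q b1 b2 = cell U' P' Q' b1 b2.
Proof.
case: (cell_rel U P Q) (cell_rel U' P' Q') => a1 a2 a3 a4 [c1 c2 c3 c4] h1 h2 h3 h4.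
by case; case; lia.
Qed.

Variable x0 : {set T}.
Variable m : nat.
Hypothesis hx0 : #|x0| = m.

Definition kap (Y Z : {set T}) :=
  (lvS x0 Y, lvS x0 Z, #|alS x0 Y :&: alS x0 Z|, #|beS x0 Y :&: beS x0 Z|).

Lemma lv_eq_card (Y Y' : {set T}) : XP m Y -> XP m Y' -> lvS x0 Y = lvS x0 Y' ->
  #|alS x0 Y| = #|alS x0 Y'| /\ #|beS x0 Y| = #|beS x0 Y'|.
Proof.
move=> h1 h2; move: (balR hx0 h1) (balR hx0 h2); rewrite /lvS; lia.
Qed.

Lemma kap_perm (Y Z Y' Z' : {set T}) : XP m Y -> XP m Z -> XP m Y' -> XP m Z' ->
  kap Y Z = kap Y' Z' ->
  exists s : {perm T}, [/\ s @: x0 = x0, s @: Y = Y' & s @: Z = Z'].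
Proof.
move=> hY hZ hY' hZ' [e1 e2 e3 e4].
case: (lv_eq_card hY hY' e1) => a1 b1.
case: (lv_eq_card hZ hZ' e2) => a2 b2.
pose t := fun k => (k \in x0, k \in Y, k \in Z).
pose t' := fun k => (k \in x0, k \in Y', k \in Z').
have hal : forall W : {set T}, alS x0 W = x0 :&: ~: W by move=> W; rewrite /alS setDE.
have hbe : forall W : {set T}, beS x0 W = ~: x0 :&: W by move=> W; rewrite /beS setDE setIC.
have hab : forall W W' : {set T}, alS x0 W :&: alS x0 W' = x0 :&: ~: W :&: ~: W'.
  by move=> W W'; rewrite !hal setIACA setIid setIA.
have hbb : forall W W' : {set T}, beS x0 W :&: beS x0 W' = ~: x0 :&: W :&: W'.
  by move=> W W'; rewrite !hbe setIACA setIid setIA.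
have hc : forall c, #|[set k | t k == c]| = #|[set k | t' k == c]|.
  case=> [[u c1] c2]; case: u.
    have E : forall W W' : {set T}, [set k | (k \in x0, k \in W, k \in W') == (true, c1, c2)]
        = [set k in x0 | (k \in ~: W == ~~ c1) && (k \in ~: W' == ~~ c2)].
      move=> W W'; apply/setP => k; rewrite !inE !xpair_eqE.
      by case: (k \in x0); case: (k \in W); case: (k \in W'); case: c1; case: c2.
    by rewrite /t /t' !E; apply: (cell_eq (U:=x0)); rewrite -?hab -?hal.
  have E : forall W W' : {set T}, [set k | (k \in x0, k \in W, k \in W') == (false, c1, c2)]
      = [set k in ~: x0 | (k \in W == c1) && (k \in W' == c2)].
    move=> W W'; apply/setP => k; rewrite !inE !xpair_eqE.
    by case: (k \in x0); case: (k \in W); case: (k \in W'); case: c1; case: c2.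
  by rewrite /t /t' !E; apply: (cell_eq (U:=~: x0)); rewrite -?hbb -?hbe.
case: (color_perm hc) => s hs.
have hs1 : forall k, (s k \in x0) = (k \in x0) by move=> k; move: (hs k); rewrite /t /t' => -[].
have hs2 : forall k, (s k \in Y') = (k \in Y) by move=> k; move: (hs k); rewrite /t /t' => -[].
have hs3 : forall k, (s k \in Z') = (k \in Z) by move=> k; move: (hs k); rewrite /t /t' => -[].
exists s; split; apply/setP => u; rewrite in_imset_perm -[in RHS](permKV s u) ?hs1 ?hs2 ?hs3 //.
Qed.


End Cells.

Section SetCard.
Variable T : finType.
Implicit Types A B : {set T}.

Lemma cD_del A B k : k \in A -> k \notin B -> (#|(A :\ k) :\: B|).+1 = #|A :\: B|.
Proof.
move=> h1 h2; have -> : (A :\ k) :\: B = (A :\: B) :\ k.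
  by apply/setP => u; rewrite !inE; case: (u \in A); case: (u \in B); case: (u == k).
by rewrite (cardsD1 k (A :\: B)) inE h1 h2.
Qed.

Lemma cD_del2 A B k : k \notin B -> #|B :\: (A :\ k)| = #|B :\: A|.
Proof.
move=> h; apply: eq_card => u; rewrite !inE.
by case: (eqVneq u k) => [->|hu]; rewrite ?(negbTE h) ?andbF ?hu //; case: (u \in A); case: (u \in B).
Qed.

Lemma cD_add A B k : k \in B -> #|(k |: A) :\: B| = #|A :\: B|.
Proof.
move=> h; apply: eq_card => u; rewrite !inE.
by case: (eqVneq u k) => [->|hu]; rewrite ?h ?hu ?orbT ?andbF //; case: (u \in A); case: (u \in B).
Qed.

Lemma cD_add2 A B k : k \notin A -> k \in B -> (#|B :\: (k |: A)|).+1 = #|B :\: A|.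
Proof.
move=> h1 h2; have -> : B :\: (k |: A) = (B :\: A) :\ k.
  by apply/setP => u; rewrite !inE; case: (u \in A); case: (u \in B); case: (u == k).
by rewrite (cardsD1 k (B :\: A)) inE h1 h2.
Qed.

Lemma cD_sub A B : A \subset B -> #|A :\: B| = 0%N.
Proof. by rewrite -setD_eq0 => /eqP ->; rewrite cards0. Qed.

Lemma cD_add1 A k : (#|(k |: A) :\: A| <= 1)%N.
Proof.
rewrite -(cards1 k); apply: subset_leq_card; apply/subsetP => u; rewrite !inE.
by case: (u == k); case: (u \in A).
Qed.

Lemma cD_tri (A B D : {set T}) : (#|A :\: D| <= #|A :\: B| + #|B :\: D|)%N.
Proof.
have h : A :\: D \subset (A :\: B) :|: (B :\: D).
  by apply/subsetP => u; rewrite !inE; case: (u \in A); case: (u \in B); case: (u \in D).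
move: (subset_leq_card h); rewrite cardsU; lia.
Qed.

End SetCard.

Section Walk.
Variable T : finType.
Variable x0 : {set T}.
Variable m : nat.
Hypothesis hx0 : #|x0| = m.
Local Notation al := (alS x0).
Local Notation be := (beS x0).
Local Notation lv := (lvS x0).

Definition nuA (i i' : nat) : nat := odd i && (i' == i.+1).
Definition nuB (i i' : nat) : nat := ~~ odd i && (i' == i.+1).

Definition ddG (Y Z : {set T}) :=
  (#|al Y :\: al Z| + #|al Z :\: al Y| + #|be Y :\: be Z| + #|be Z :\: be Y|)%N.

Lemma lv_even Y : #|be Y| = #|al Y| -> odd (lv Y) = false.
Proof. by move=> h; rewrite /lvS h addnn odd_double. Qed.

Lemma lv_odd Y : #|be Y| = (#|al Y|).+1 -> odd (lv Y) = true.
Proof. by move=> h; rewrite /lvS h addnS addnn /= odd_double. Qed.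

Lemma step_bound (Y Y' : {set T}) : XP m Y -> XP m Y' -> adjG Y Y' ->
  (#|al Y' :\: al Y| <= nuA (lv Y) (lv Y'))%N /\ (#|be Y' :\: be Y| <= nuB (lv Y) (lv Y'))%N.
Proof.
move=> hY hY' ha; case: (adj_flip hx0 hY hY' ha) => k [[hk e]|[hk e]];
  case hx: (k \in x0); move: hY'; rewrite e => hY'.
- by rewrite alS_add // beS_add // cD_sub ?subD1set // cD_sub //.
- have hx' : k \notin x0 by rewrite hx.
  rewrite alS_addC // beS_addC // cD_sub //; split => //.
  have hkb : k \notin be Y by rewrite in_beS (negbTE hk) andbF.
  have e1 : #|be (k |: Y)| = (#|be Y|).+1 by rewrite beS_addC // cardsU1 hkb.
  have e2 : #|al (k |: Y)| = #|al Y| by rewrite alS_addC.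
  move: (balR hx0 hY') (balR hx0 hY); rewrite e1 e2 => h1 h2.
  rewrite /nuB (lv_addB hx0 hx' hk) eqxx lv_even; last by lia.
  exact: cD_add1.
- have e1 : #|al (Y :\ k)| = (#|al Y|).+1.
    by rewrite alS_del // cardsU1 in_alS hk andbF.
  have e2 : #|be (Y :\ k)| = #|be Y| by rewrite beS_del.
  move: (balR hx0 hY') (balR hx0 hY); rewrite e1 e2 => h1 h2.
  rewrite beS_del // alS_del // (cD_sub (subxx _)); split => //.
  rewrite /nuA (lv_delA hx0 hx hk) eqxx lv_odd; last by lia.
  exact: cD_add1.
- have hx' : k \notin x0 by rewrite hx.
  rewrite alS_delC // beS_delC // cD_sub //; split => //.
  by rewrite cD_sub // subD1set.
Qed.

Lemma nSS n : (n == n.+2) = false.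
Proof. by elim: n. Qed.

Lemma sub_eqc (A B : {set T}) : A \subset B -> (#|B| <= #|A|)%N -> A = B.
Proof. by move=> h1 h2; apply/eqP; rewrite eqEcard h1 h2. Qed.

Lemma step_exists (Y Z : {set T}) : XP m Y -> XP m Z -> Y != Z ->
  exists Y', [/\ XP m Y', adjG Y Y', (ddG Y' Z < ddG Y Z)%N,
    (nuA (lv Y) (lv Y') + #|al Z :\: al Y'| = #|al Z :\: al Y|)%N &
    (nuB (lv Y) (lv Y') + #|be Z :\: be Y'| = #|be Z :\: be Y|)%N].
Proof.
move=> hY hZ hne; move: (balR hx0 hZ) => hZb; rewrite /ddG.
case: (balX hx0 hY) => [[hb hc]|[hb hc]].
- case: (boolP [exists k, (k \in al Y) && (k \notin al Z)]).
    case/existsP => k /andP[]; rewrite in_alS => /andP[hx hk] hkZ.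
    exists (k |: Y); split.
    + by rewrite /XP cardsU1 hk hc eqxx orbT.
    + exact: adj_add.
    + rewrite alS_add // beS_add // (cD_del2 _ hkZ).
      move: (@cD_del _ (al Y) (al Z) k); rewrite in_alS hx hk => /(_ isT hkZ); lia.
    + rewrite alS_add // (cD_del2 _ hkZ) /nuA.
      by move: (lv_addA hx0 hx hk) => <-; rewrite nSS andbF.
    + rewrite beS_add // /nuB.
      by move: (lv_addA hx0 hx hk) => <-; rewrite nSS andbF.
  rewrite negb_exists => /forallP hal.
  have hsa : al Y \subset al Z.
    by apply/subsetP => u hu; move: (hal u); rewrite hu /= negbK.
  case: (boolP [exists k, (k \in be Z) && (k \notin be Y)]).
    case/existsP => k /andP[]; rewrite in_beS => /andP[hx hkz] hkY.
    have hk : k \notin Y by move: hkY; rewrite in_beS hx.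
    exists (k |: Y); split.
    + by rewrite /XP cardsU1 hk hc eqxx orbT.
    + exact: adj_add.
    + rewrite alS_addC // beS_addC // (cD_add _ (k:=k)) ?in_beS ?hx //.
      move: (@cD_add2 _ (be Y) (be Z) k hkY); rewrite in_beS hx hkz => /(_ isT); lia.
    + by rewrite alS_addC // /nuA (lv_even hb).
    + rewrite beS_addC // /nuB (lv_addB hx0 hx hk) eqxx (lv_even hb) /=.
      move: (@cD_add2 _ (be Y) (be Z) k hkY); rewrite in_beS hx hkz => /(_ isT); lia.
  rewrite negb_exists => /forallP hbe.
  have hsb : be Z \subset be Y.
    by apply/subsetP => u hu; move: (hbe u); rewrite hu /= negbK.
  have c1 := subset_leq_card hsa; have c2 := subset_leq_card hsb.
  have e1 : al Y = al Z by apply: sub_eqc => //; lia.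
  have e2 : be Z = be Y by apply: sub_eqc => //; lia.
  by move: hne; rewrite (setY_eq e1 (esym e2)) eqxx.
- case: (boolP [exists k, (k \in be Y) && (k \notin be Z)]).
    case/existsP => k /andP[]; rewrite in_beS => /andP[hx hk] hkZ.
    exists (Y :\ k); split.
    + by rewrite /XP; move: (cardsD1 k Y); rewrite hk hc /= => e; apply/orP; left; apply/eqP; lia.
    + exact: adj_del.
    + rewrite alS_delC // beS_delC // (cD_del2 _ hkZ).
      move: (@cD_del _ (be Y) (be Z) k); rewrite in_beS hx hk => /(_ isT hkZ); lia.
    + rewrite alS_delC // /nuA.
      by move: (lv_delB hx0 hx hk) => <-; rewrite nSS andbF.
    + rewrite beS_delC // (cD_del2 _ hkZ) /nuB.
      by move: (lv_delB hx0 hx hk) => <-; rewrite nSS andbF.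
  rewrite negb_exists => /forallP hbe.
  have hsb : be Y \subset be Z.
    by apply/subsetP => u hu; move: (hbe u); rewrite hu /= negbK.
  case: (boolP [exists k, (k \in al Z) && (k \notin al Y)]).
    case/existsP => k /andP[]; rewrite in_alS => /andP[hx hkz] hkY.
    have hk : k \in Y by move: hkY; rewrite in_alS hx /= negbK.
    exists (Y :\ k); split.
    + by rewrite /XP; move: (cardsD1 k Y); rewrite hk hc /= => e; apply/orP; left; apply/eqP; lia.
    + exact: adj_del.
    + rewrite alS_del // beS_del // (cD_add _ (k:=k)) ?in_alS ?hx //.
      move: (@cD_add2 _ (al Y) (al Z) k hkY); rewrite in_alS hx hkz => /(_ isT); lia.
    + rewrite alS_del // /nuA (lv_delA hx0 hx hk) eqxx (lv_odd hb) /=.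
      move: (@cD_add2 _ (al Y) (al Z) k hkY); rewrite in_alS hx hkz => /(_ isT); lia.
    + by rewrite beS_del // /nuB (lv_odd hb).
  rewrite negb_exists => /forallP hal.
  have hsa : al Z \subset al Y.
    by apply/subsetP => u hu; move: (hal u); rewrite hu /= negbK.
  have c1 := subset_leq_card hsa; have c2 := subset_leq_card hsb.
  have e1 : al Z = al Y by apply: sub_eqc => //; lia.
  have e2 : be Y = be Z by apply: sub_eqc => //; lia.
  by move: hne; rewrite (setY_eq (esym e1) e2) eqxx.
Qed.

End Walk.

Import GRing.Theory Num.Theory.
Local Open Scope ring_scope.

Section Mat.
Variable C : numFieldType.
Variable m : nat.
Local Notation XX := (X m).
Local Notation MM := ('M[C]_(#|X m|)).

Definition lvX (y : XX) := lvS (x0 m) (val y).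
Definition kapX (y z : XX) := kap (x0 m) (val y) (val z).

Lemma entry_mul (B D : MM) y z :
  entry C m (B *m D) y z = \sum_(x : XX) entry C m B y x * entry C m D x z.
Proof.
rewrite /entry mxE (reindex (@enum_rank XX)) //.
by apply: onW_bij; exact: enum_rank_bij.
Qed.

Lemma entry_A1 y z : entry C m (A1 C m) y z = (adj m (val y) (val z))%:R.
Proof. by rewrite /entry /A1 mxE !enum_rankK. Qed.

Lemma entry_E k y z : entry C m (Estar C m k) y z = ((y == z) && (lvX y == k))%:R.
Proof. by rewrite /entry /Estar mxE (inj_eq enum_rank_inj) enum_rankK dist_char. Qed.

Lemma entry_1 y z : entry C m (1%:M : MM) y z = (y == z)%:R.
Proof. by rewrite /entry mxE (inj_eq enum_rank_inj). Qed.

Lemma entry_add (B D : MM) y z : entry C m (B + D) y z = entry C m B y z + entry C m D y z.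
Proof. by rewrite /entry mxE. Qed.

Lemma entry_scale c (B : MM) y z : entry C m (c *: B) y z = c * entry C m B y z.
Proof. by rewrite /entry mxE. Qed.

Lemma mx_ext (B D : MM) : (forall y z, entry C m B y z = entry C m D y z) -> B = D.
Proof.
move=> h; apply/matrixP => i j; move: (h (enum_val i) (enum_val j)).
by rewrite /entry !enum_valK.
Qed.

Lemma adjE (Y Z : {set S m}) : adj m Y Z = adjG Y Z.
Proof. by []. Qed.

Lemma XpredE (Y : {set S m}) : Xpred m Y = XP m Y.
Proof. by []. Qed.

Lemma val_actX s (y : XX) : val (Defs.actX m s y) = s @: val y.
Proof. by []. Qed.

Lemma actX_can s : cancel (Defs.actX m s) (Defs.actX m (s^-1)%g).
Proof. by move=> y; apply: val_inj; rewrite !val_actX imsetK_perm. Qed.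

Lemma actX_inj s : injective (Defs.actX m s).
Proof. exact: can_inj (actX_can s). Qed.

Lemma actX_bij s : bijective (Defs.actX m s).
Proof.
exists (Defs.actX m (s^-1)%g); first exact: actX_can.
by move=> y; rewrite -{2}(actX_can (s^-1)%g y) invgK.
Qed.

Lemma lv_actX s y : inG m s -> lvX (Defs.actX m s y) = lvX y.
Proof. by move/eqP => hs; rewrite /lvX val_actX lv_imset. Qed.

Lemma inT_inCent (B : MM) : inT C m B -> inCent C m B.
Proof.
elim => {B} [|k _||B D _ IHB _ IHD|c B _ IH|B D _ IHB _ IHD] s hs y z.
- by rewrite !entry_A1 !val_actX !adjE adjG_imset.
- by rewrite !entry_E (inj_eq (actX_inj (s:=s))) lv_actX.
- by rewrite !entry_1 (inj_eq (actX_inj (s:=s))).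
- by rewrite !entry_add IHB // IHD.
- by rewrite !entry_scale IH.
- rewrite !entry_mul (reindex (Defs.actX m s)); last by apply: onW_bij; exact: actX_bij.
  by apply: eq_bigr => x _; rewrite IHB // IHD.
Qed.

End Mat.

Import GRing.Theory Num.Theory.
Local Open Scope ring_scope.

Section Key.
Variable C : numFieldType.
Variable m : nat.
Local Notation XX := (X m).
Local Notation MM := ('M[C]_(#|X m|)).
Local Notation lv := (@lvX m).
Local Notation al := (alS (x0 m)).
Local Notation be := (beS (x0 m)).

Definition Cst (B : MM) := forall y z y' z', kapX y z = kapX y' z' ->
  entry C m B y z = entry C m B y' z'.

Lemma inCent_Cst B : inCent C m B -> Cst B.
Proof.
move=> hB y z y' z' hk.
case: (kap_perm (card_x0 m) (valP y) (valP z) (valP y') (valP z') hk) => s [h1 h2 h3].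
have hs : inG m s by rewrite /inG h1.
rewrite -(hB s hs y z); congr (entry C m B _ _); apply: val_inj; rewrite val_actX //.
Qed.

Lemma lv_le (y : XX) : (lv y <= m.*2.+1)%N.
Proof.
rewrite /lvX /lvS.
have h1 : (#|al (val y)| <= #|x0 m|)%N by apply: subset_leq_card; exact: subsetDl.
have h2 : (#|be (val y)| <= #|~: x0 m|)%N.
  by apply: subset_leq_card; apply/subsetP => u; rewrite !inE => /andP[].
move: (cardsC (x0 m)); rewrite card_ord; lia.
Qed.

Lemma zero_inT : inT C m 0.
Proof. by rewrite -(scale0r (1%:M : MM)); apply: inT_scale; exact: inT_1. Qed.

Lemma Estar_inT k : inT C m (Estar C m k).
Proof.
case: (leqP k m.*2.+1) => hk; first exact: inT_E.
have -> : Estar C m k = 0; last exact: zero_inT.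
apply: mx_ext => y z; rewrite entry_E /entry mxE.
have -> : (lv y == k) = false by apply/eqP; move: (lv_le y); lia.
by rewrite andbF.
Qed.

Fixpoint Mw (i : nat) (w : seq nat) : MM :=
  match w with
  | [::] => Estar C m i
  | i' :: w' => Estar C m i *m (A1 C m *m Mw i' w')
  end.

Fixpoint reach (i : nat) (w : seq nat) (y z : XX) : Prop :=
  match w with
  | [::] => lv y = i /\ y = z
  | i' :: w' => lv y = i /\ exists x, adj m (val y) (val x) /\ reach i' w' x z
  end.

Fixpoint nuAw (i : nat) (w : seq nat) : nat :=
  match w with [::] => 0%N | i' :: w' => (nuA i i' + nuAw i' w')%N end.
Fixpoint nuBw (i : nat) (w : seq nat) : nat :=
  match w with [::] => 0%N | i' :: w' => (nuB i i' + nuBw i' w')%N end.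

Lemma Mw_inT i w : inT C m (Mw i w).
Proof.
elim: w i => [|i' w IH] i /=; first exact: Estar_inT.
by apply: inT_mul; [exact: Estar_inT | apply: inT_mul; [exact: inT_A1 | exact: IH]].
Qed.

Lemma sum_neq0 (F : XX -> C) : (forall x, 0 <= F x) ->
  (\sum_x F x != 0) <-> exists x, F x != 0.
Proof.
move=> hF; split.
  move=> hs; apply/existsP; apply: contraR hs; rewrite negb_exists => /forallP h.
  by apply/eqP; apply: big1 => x _; move: (h x); rewrite negbK => /eqP.
case=> x hx; apply/eqP => hs; move: (psumr_eq0P (P:=xpredT) (fun i _ => hF i) hs (i:=x) isT).
by move/eqP: hx.
Qed.

Lemma natb_ge0 (b : bool) : 0 <= (b%:R : C).
Proof. exact: ler0n. Qed.

Lemma natb_neq0 (b : bool) : ((b%:R : C) != 0) = b.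
Proof. by case: b; rewrite ?pnatr_eq0 ?eqxx ?oner_eq0. Qed.

Lemma Mw_entry i w y z : 0 <= entry C m (Mw i w) y z /\
  (entry C m (Mw i w) y z != 0 <-> reach i w y z).
Proof.
elim: w i y => [|i' w IH] i y /=.
  rewrite entry_E natb_ge0 natb_neq0; split => //; split.
    by case/andP => /eqP -> /eqP.
  by case=> -> ->; rewrite !eqxx.
have hin : forall x, 0 <= entry C m (A1 C m *m Mw i' w) x z.
  move=> x; rewrite entry_mul; apply: sumr_ge0 => x' _; rewrite entry_A1.
  by apply: mulr_ge0; [exact: natb_ge0 | case: (IH i' x')].
rewrite entry_mul; split.
  by apply: sumr_ge0 => x _; rewrite entry_E; apply: mulr_ge0; [exact: natb_ge0|exact: hin].
rewrite sum_neq0; last first.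
  by move=> x; rewrite entry_E; apply: mulr_ge0; [exact: natb_ge0|exact: hin].
split.
  case=> x; rewrite mulf_eq0 negb_or entry_E natb_neq0 => /andP[/andP[/eqP <- /eqP hl]].
  rewrite entry_mul sum_neq0; last first.
    by move=> x'; rewrite entry_A1; apply: mulr_ge0; [exact: natb_ge0 | case: (IH i' x')].
  case=> x'; rewrite mulf_eq0 negb_or entry_A1 natb_neq0 => /andP[ha hM].
  by split => //; exists x'; split => //; case: (IH i' x') => _ [h _]; exact: h.
case=> hl [x' [ha hr]]; exists y; rewrite mulf_neq0 // ?entry_E ?natb_neq0 ?eqxx ?hl //=.
rewrite entry_mul sum_neq0; last first.
  by move=> x; rewrite entry_A1; apply: mulr_ge0; [exact: natb_ge0 | case: (IH i' x)].
exists x'; rewrite mulf_neq0 // ?entry_A1 ?natb_neq0 //.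
by case: (IH i' x') => _ [_]; apply.
Qed.

Lemma reach_bound i w y z : reach i w y z ->
  [/\ lv y = i, lv z = last i w,
     (#|al (val z) :\: al (val y)| <= nuAw i w)%N &
     (#|be (val z) :\: be (val y)| <= nuBw i w)%N].
Proof.
elim: w i y => [|i' w IH] i y /=.
  by case=> <- <-; rewrite !setDv !cards0; split.
case=> hl [x [ha hr]]; case: (IH i' x hr) => hx hz h1 h2.
case: (step_bound (card_x0 m) (valP y) (valP x) ha); rewrite -/(lv y) -/(lv x) hl hx => s1 s2.
split => //.
  by move: h1 s1 (cD_tri (al (val z)) (al (val x)) (al (val y))) => /=; lia.
by move: h2 s2 (cD_tri (be (val z)) (be (val x)) (be (val y))) => /=; lia.
Qed.

Lemma walk_exists y z : exists w, [/\ reach (lv y) w y z,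
  nuAw (lv y) w = #|al (val z) :\: al (val y)| &
  nuBw (lv y) w = #|be (val z) :\: be (val y)|].
Proof.
move: {2}(ddG (x0 m) (val y) (val z)) (leqnn (ddG (x0 m) (val y) (val z))) => n.
elim: n y => [|n IH] y hn; (case: (eqVneq y z) => [<-|hne];
  first by exists [::]; rewrite /= !setDv !cards0).
- have hne' : val y != val z by apply: contra hne => /eqP /val_inj ->.
  case: (step_exists (card_x0 m) (valP y) (valP z) hne') => Y' [_ _ hd _ _]; lia.
have hne' : val y != val z by apply: contra hne => /eqP /val_inj ->.
case: (step_exists (card_x0 m) (valP y) (valP z) hne') => Y' [hX ha hd e1 e2].
pose y1 : XX := exist _ Y' hX.
case: (IH y1) => [|w [hr f1 f2]].
  by rewrite /y1 /=; move: hd hn => /=; lia.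
exists (lv y1 :: w); split => /=.
- by split => //; exists y1.
- by rewrite f1 /y1 /lvX /= e1.
- by rewrite f2 /y1 /lvX /= e2.
Qed.

End Key.

Import GRing.Theory Num.Theory.
Local Open Scope ring_scope.

Section Key2.
Variable C : numFieldType.
Variable m : nat.
Local Notation XX := (X m).
Local Notation MM := ('M[C]_(#|X m|)).
Local Notation lv := (@lvX m).
Local Notation al := (alS (x0 m)).
Local Notation be := (beS (x0 m)).

Definition hh (y z : XX) : nat := ((kapX y z).1.2 + (kapX y z).2)%N.

Lemma hh_lt y z : (hh y z < m.*2.+2)%N.
Proof.
rewrite /hh /kapX /kap /=.
have h1 : (#|al (val y) :&: al (val z)| <= #|al (val y)|)%N by apply: subset_leq_card; exact: subsetIl.
have h2 : (#|be (val y) :&: be (val z)| <= #|be (val y)|)%N by apply: subset_leq_card; exact: subsetIl.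
move: h1 h2 (lv_le y); rewrite /lvX /lvS /=; lia.
Qed.

Lemma M0_exists y z : exists M0 : MM, [/\ inT C m M0, entry C m M0 y z != 0 &
  forall y' z', entry C m M0 y' z' != 0 -> kapX y' z' = kapX y z \/ (hh y z < hh y' z')%N].
Proof.
case: (walk_exists y z) => w [hr f1 f2].
exists (@Mw C m (lv y) w); split; first exact: Mw_inT.
  by case: (@Mw_entry C m (lv y) w y z) => _ [_]; apply.
move=> y' z' hne; case: (@Mw_entry C m (lv y) w y' z') => _ [/(_ hne) hr' _].
case: (reach_bound hr) => _ hz _ _.
case: (reach_bound hr') => hy' hz' b1 b2.
rewrite f1 in b1; rewrite f2 in b2.
have hzz : lv z' = lv z by rewrite hz' hz.
case: (lv_eq_card (card_x0 m) (valP z') (valP z) hzz) => ca cb.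
move: (cardsID (al (val y')) (al (val z'))) (cardsID (al (val y)) (al (val z)))
  (cardsID (be (val y')) (be (val z'))) (cardsID (be (val y)) (be (val z))).
rewrite ![_ (val z') :&: _ (val y')]setIC ![_ (val z) :&: _ (val y)]setIC.
rewrite /hh /kapX /kap /= => e1 e2 e3 e4.
have hy'' : lvS (x0 m) (val y') = lvS (x0 m) (val y) by exact: hy'.
have hz'' : lvS (x0 m) (val z') = lvS (x0 m) (val z) by exact: hzz.
rewrite hy'' hz''.
case: (eqVneq #|al (val y') :&: al (val z')| #|al (val y) :&: al (val z)|) => ec.
  case: (eqVneq #|be (val y') :&: be (val z')| #|be (val y) :&: be (val z)|) => ed.
    by left; rewrite ec ed.
  by right; move: b1 b2 ca cb e1 e2 e3 e4 ec ed => /=; lia.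
by right; move: b1 b2 ca cb e1 e2 e3 e4 ec => /=; lia.
Qed.

Lemma Cst_sub (B D : MM) c : Cst B -> Cst D -> Cst (B - c *: D).
Proof.
move=> hB hD y z y' z' hk.
by rewrite /entry !mxE -!/(entry C m _ _ _) (hB _ _ _ _ hk) (hD _ _ _ _ hk).
Qed.

Lemma Cst_inT_aux n : forall B : MM, Cst B ->
  (forall y z, entry C m B y z != 0 -> (m.*2.+2 - n <= hh y z)%N) -> inT C m B.
Proof.
elim: n => [|n IHn] B hB hsup.
  have -> : B = 0; last exact: zero_inT.
  apply: mx_ext => y z; rewrite /entry mxE -/(entry C m B y z).
  apply/eqP; apply: contraT => hne; move: (hsup y z hne) (hh_lt y z); lia.
set L := (m.*2.+2 - n.+1)%N.
pose cnt (D : MM) := #|[set p : XX * XX | (entry C m D p.1 p.2 != 0) && (hh p.1 p.2 == L)]|.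
suff : forall N (D : MM), (cnt D <= N)%N -> Cst D ->
  (forall y z, entry C m D y z != 0 -> (L <= hh y z)%N) -> inT C m D.
  by move=> H; apply: (H (cnt B)).
elim => [|N IHN] D hc hD hs.
  apply: IHn => // y z hne; move: (hs y z hne) => hl.
  case: (eqVneq (hh y z) L) => e; last by rewrite /L in e hl *; lia.
  have : (y, z) \in [set p : XX * XX | (entry C m D p.1 p.2 != 0) && (hh p.1 p.2 == L)].
    by rewrite inE /= hne e eqxx.
  move=> hin; have hp : (0 < cnt D)%N by apply/card_gt0P; exists (y, z).
  by exfalso; move: hp hc; rewrite /cnt; lia.
case: (pickP [pred p : XX * XX | (entry C m D p.1 p.2 != 0) && (hh p.1 p.2 == L)]) => [[y z]|hnone]; last first.
  apply: IHn => // y z hne; move: (hs y z hne) => hl.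
  case: (eqVneq (hh y z) L) => e; last by rewrite /L in e hl *; lia.
  by move: (hnone (y, z)); rewrite /= hne e eqxx.
rewrite /= => /andP[hne /eqP hL].
case: (M0_exists y z) => M0 [hM0 hM0ne hM0s].
have hM0c : Cst M0 by apply: inCent_Cst; exact: inT_inCent.
set c := entry C m D y z / entry C m M0 y z.
have -> : D = (D - c *: M0) + c *: M0 by rewrite subrK.
apply: inT_add; last exact: inT_scale.
have eD : forall y' z', entry C m (D - c *: M0) y' z' = entry C m D y' z' - c * entry C m M0 y' z'.
  by move=> y' z'; rewrite /entry !mxE.
apply: IHN; first last.
- move=> y' z'; rewrite eD => hne'.
  case: (eqVneq (entry C m D y' z') 0) => hD0; last exact: hs.
  have hM : entry C m M0 y' z' != 0.
    by apply: contra hne' => /eqP ->; rewrite hD0 mulr0 subr0.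
  case: (hM0s y' z' hM) => [hk|]; last by rewrite hL; lia.
  by rewrite /hh hk -/(hh y z) hL.
- exact: Cst_sub.
rewrite -ltnS; apply: leq_trans hc; apply: proper_card; apply/properP; split.
  apply/subsetP => [[y' z']]; rewrite !inE /= eD => /andP[hne' /eqP hL'].
  rewrite hL' eqxx andbT; apply: contra hne' => /eqP hD0.
  case: (eqVneq (entry C m M0 y' z') 0) => [->|hM]; first by rewrite hD0 mulr0 subr0.
  case: (hM0s y' z' hM) => [hk|]; last by rewrite hL' hL; lia.
  by move: hne; rewrite -(hD _ _ _ _ hk) hD0 eqxx.
exists (y, z); first by rewrite inE /= hne hL eqxx.
by rewrite inE /= eD /c divfK // subrr eqxx.
Qed.

Lemma Cst_inT (B : MM) : Cst B -> inT C m B.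
Proof.
move=> hB; apply: (@Cst_inT_aux m.*2.+2) => // y z _.
by rewrite subnn.
Qed.

End Key2.


Unset Implicit Arguments.

Theorem theorem4p11 (C : numClosedFieldType) (m : nat) :
  (3 <= m)%N ->
  forall B : 'M[C]_(#|X m|), inT C m B <-> inCent C m B.
Proof.
move=> _ B; split; first exact: inT_inCent.
by move=> h; apply: Cst_inT; exact: inCent_Cst.
Qed.
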